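(* Let $\Sigma_M\subset\mathbb{C}P^2$ be a torus obtained from the construction in the context (with integers $\alpha_1,\alpha_2,\alpha_3$ such that $\alpha_1-\alpha_3$ and $\alpha_2-\alpha_3$ are relatively prime, and parameters $a_1>a_2>0$, $a_3$ as there). Then its area satisfies $$A(\Sigma_M)>\pi^2\frac{a_1+a_2}{\sqrt{a_1+a_3}}.$$
   Context: $\mathbb{C}P^2$ carries the Fubini–Study metric for which the Hopf projection $S^5\to\mathbb{C}P^2$ is a Riemannian submersion; $A(\Sigma)$ is the area of the immersed torus with respect to the induced metric, computed over a fundamental domain of the period lattice of the immersion. Construction: put $b=-\alpha_1-\alpha_2-\alpha_3$, $c=\alpha_1\alpha_2+\alpha_1\alpha_3+\alpha_2\alpha_3$, $c_1=-\alpha_1\alpha_2\alpha_3$. Let $a_1>a_2>0$ be reals with $P:=a_1^3a_2^2+a_1^2a_2^3+(a_1^2a_2+a_1a_2^2)bc_1+(a_1^2+a_2^2)c_1^2+2a_1^2a_2^2c\le 0$ and $P^2-(a_1-a_2)^2\bigl((a_1+a_2)c_1^2-a_1^2a_2^2+a_1a_2bc_1\bigr)^2\ge0$. Let $c_2$ be a real root of $(a_1-a_2)^2x^4+2Px^2+\bigl((a_1+a_2)c_1^2-a_1^2a_2^2+a_1a_2bc_1\bigr)^2=0$, and set $a_3=\frac{c_1^2+c_2^2}{a_1a_2}$, $a=\frac{bc_1+a_1a_3+a_2a_3-a_1a_2}{c_2}$. Define $v$ by $2e^{v(x)}=a_1\bigl(1-\frac{a_1-a_2}{a_1}\mathrm{sn}^2(x\sqrt{a_1+a_3},k)\bigr)$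 with $k=\frac{a_1-a_2}{a_1+a_3}$, where $\mathrm{sn}(u,k)=\sin\theta$ for $u=\int_0^\theta\frac{d\phi}{\sqrt{1-k^2\sin^2\phi}}$; $v$ has period $T=2u(\pi/2)/\sqrt{a_1+a_3}$. For $i$ modulo 3 let $F_i=\sqrt{\frac{2e^v+\alpha_{i+1}\alpha_{i+2}}{(\alpha_i-\alpha_{i+1})(\alpha_i-\alpha_{i+2})}}$, $G_i(x)=\alpha_i\int_0^x\frac{c_2-ae^{v}}{2\alpha_ie^{v}-c_1}dz$, and $\psi(x,y)=\bigl(F_1e^{i(G_1+\alpha_1y)}:F_2e^{i(G_2+\alpha_2y)}:F_3e^{i(G_3+\alpha_3y)}\bigr)$, a conformal immersion $\mathbb{R}^2\to\mathbb{C}P^2$ with induced metric $2e^{v(x)}(dx^2+dy^2)$. Assume there is $\tau\in\mathbb{R}$ with $\frac{G_1(T)-G_3(T)+(\alpha_1-\alpha_3)\tau}{2\pi},\ \frac{G_2(T)-G_3(T)+(\alpha_2-\alpha_3)\tau}{2\pi}\in\mathbb{Q}$; then $\psi$ is doubly periodic and $\Sigma_M=\psi(\mathbb{R}^2)$ is an immersed torus. *)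

(* Defs.v *)
From Stdlib Require Import Reals Lra ZArith QArith ClassicalEpsilon.
From Coquelicot Require Import Coquelicot.
Open Scope R_scope.

Definition ell_F (k theta : R) : R :=
  RInt (fun phi => / sqrt (1 - k ^ 2 * (sin phi) ^ 2)) 0 theta.

(** amplitude: the θ with ell_F k θ = u (unique for 0 <= k < 1) *)
Definition jacobi_am (k u : R) : R :=
  epsilon (inhabits 0) (fun theta => ell_F k theta = u).

Definition jacobi_sn (u k : R) : R := sin (jacobi_am k u).

(** * Parameters of the construction.
    al1 al2 al3 are the (real images of the integer) α_i, a1 a2 the reals
    a_1 > a_2 > 0, and c2 the chosen real root. *)
Record tparams := TParams { al1 : R; al2 : R; al3 : R; pa1 : R; pa2 : R; pc2 : R }.

Section Construction.
Local Notation A1 p := (al1 p).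
Local Notation A2 p := (al2 p).
Local Notation A3 p := (al3 p).

Definition par_b (p : tparams) : R := - A1 p - A2 p - A3 p.
Definition par_c (p : tparams) : R := A1 p * A2 p + A1 p * A3 p + A2 p * A3 p.
Definition par_c1 (p : tparams) : R := - (A1 p * A2 p * A3 p).

Definition par_P (p : tparams) : R :=
  let a1 := pa1 p in let a2 := pa2 p in
  a1 ^ 3 * a2 ^ 2 + a1 ^ 2 * a2 ^ 3
  + (a1 ^ 2 * a2 + a1 * a2 ^ 2) * par_b p * par_c1 p
  + (a1 ^ 2 + a2 ^ 2) * par_c1 p ^ 2 + 2 * a1 ^ 2 * a2 ^ 2 * par_c p.

Definition par_Q (p : tparams) : R :=
  let a1 := pa1 p in let a2 := pa2 p in
  (a1 + a2) * par_c1 p ^ 2 - a1 ^ 2 * a2 ^ 2 + a1 * a2 * par_b p * par_c1 p.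

Definition par_a3 (p : tparams) : R :=
  (par_c1 p ^ 2 + pc2 p ^ 2) / (pa1 p * pa2 p).

Definition par_a (p : tparams) : R :=
  (par_b p * par_c1 p + pa1 p * par_a3 p + pa2 p * par_a3 p - pa1 p * pa2 p) / pc2 p.

Definition par_k (p : tparams) : R := (pa1 p - pa2 p) / (pa1 p + par_a3 p).

Definition two_ev (p : tparams) (x : R) : R :=
  pa1 p * (1 - (pa1 p - pa2 p) / pa1 p
                 * (jacobi_sn (x * sqrt (pa1 p + par_a3 p)) (par_k p)) ^ 2).

Definition ev (p : tparams) (x : R) : R := two_ev p x / 2.

Definition period_T (p : tparams) : R :=
  2 * ell_F (par_k p) (PI / 2) / sqrt (pa1 p + par_a3 p).

(** radicand of F_i, for α_i = ai and {α_{i+1}, α_{i+2}} = {aj, ak} *)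
Definition F_radicand (p : tparams) (ai aj ak : R) (x : R) : R :=
  (2 * ev p x + aj * ak) / ((ai - aj) * (ai - ak)).

Definition F_coef (p : tparams) (ai aj ak : R) (x : R) : R :=
  sqrt (F_radicand p ai aj ak x).

Definition G_phase (p : tparams) (ai : R) (x : R) : R :=
  ai * RInt (fun z => (pc2 p - par_a p * ev p z) / (2 * ai * ev p z - par_c1 p)) 0 x.

Definition F1 p := F_coef p (A1 p) (A2 p) (A3 p).
Definition F2 p := F_coef p (A2 p) (A3 p) (A1 p).
Definition F3 p := F_coef p (A3 p) (A1 p) (A2 p).
Definition G1 p := G_phase p (A1 p).
Definition G2 p := G_phase p (A2 p).
Definition G3 p := G_phase p (A3 p).

End Construction.

(** * Complex projective plane CP^2: points are represented by nonzero
    vectors of C^3, two representatives being equal in CP^2 iff they differ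
    by a nonzero complex scalar. *)
Definition C3 : Type := (C * C * C)%type.

Definition cp2_eq (u w : C3) : Prop :=
  exists l : C, l <> 0%C /\
    fst (fst w) = Cmult l (fst (fst u)) /\
    snd (fst w) = Cmult l (snd (fst u)) /\
    snd w = Cmult l (snd u).

Definition polar (F theta : R) : C := (F * cos theta, F * sin theta).

Definition psi (p : tparams) (x y : R) : C3 :=
  (polar (F1 p x) (G1 p x + al1 p * y),
   polar (F2 p x) (G2 p x + al2 p * y),
   polar (F3 p x) (G3 p x + al3 p * y)).

Definition period_set (p : tparams) (w : R * R) : Prop :=
  forall x y : R, cp2_eq (psi p x y) (psi p (x + fst w) (y + snd w)).

Definition det2 (w1 w2 : R * R) : R := fst w1 * snd w2 - snd w1 * fst w2.

Definition is_lattice_basis (L : R * R -> Prop) (w1 w2 : R * R) : Prop :=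
  det2 w1 w2 <> 0 /\
  forall w : R * R, L w <->
    exists m n : Z, w = (IZR m * fst w1 + IZR n * fst w2,
                         IZR m * snd w1 + IZR n * snd w2).

(** Area of the torus for the induced metric 2 e^{v(x)} (dx^2 + dy^2),
    integrated over the fundamental parallelogram {s w1 + t w2 | s,t ∈ [0,1]}
    (parametrized by (s,t), with Jacobian |det(w1,w2)|). *)
Definition torus_area (p : tparams) (w1 w2 : R * R) : R :=
  Rabs (det2 w1 w2) *
  RInt (fun s => RInt (fun t => two_ev p (s * fst w1 + t * fst w2)) 0 1) 0 1.

Definition is_rational (r : R) : Prop := exists q : Q, r = Q2R q.

(* Main.v *)
Require Import Defs.
From Stdlib Require Import Reals Lra Lia ZArith QArith Classical ClassicalEpsilon.
From Coquelicot Require Import Coquelicot.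
Open Scope R_scope.
Definition Cont (f : R -> R) := forall x : R, continuous f x.

Lemma cint (f : R -> R) (a b : R) : Cont f -> ex_RInt f a b.
Proof. intros Hf. apply (@ex_RInt_continuous R_CompleteNormedModule). intros; apply Hf. Qed.

Lemma cont_lin (f : R -> R) (u v : R) : Cont f -> Cont (fun y => f (u * y + v)).
Proof.
  intros Hf x. apply (continuous_comp (fun y => u * y + v) f). 2: apply Hf.
  apply (continuous_plus (fun y => u * y) (fun _ => v)). 2: apply continuous_const.
  apply (continuous_mult (fun _ => u) (fun y => y)). apply continuous_const. apply continuous_id.
Qed.

Lemma Chas (f : R -> R) (a b c : R) : Cont f -> RInt f a b + RInt f b c = RInt f a c.
Proof. intros Hf. exact (RInt_Chasles f a b c (cint f a b Hf) (cint f b c Hf)). Qed.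

Lemma RInt_scale (f : R -> R) (a b u v : R) : Cont f ->
  u * RInt (fun y => f (u * y + v)) a b = RInt f (u * a + v) (u * b + v).
Proof.
  intros Hf. pose proof (RInt_comp_lin f u v a b (cint _ _ _ Hf)) as H.
  rewrite <- H. 
  rewrite RInt_scal. reflexivity.
  apply cint, cont_lin, Hf.
Qed.

Lemma RInt_shift (f : R -> R) (a b v : R) : Cont f ->
  RInt (fun y => f (y + v)) a b = RInt f (a + v) (b + v).
Proof.
  intros Hf. pose proof (RInt_scale f a b 1 v Hf) as H.
  replace (1 * a + v) with (a + v) in H by ring. replace (1 * b + v) with (b + v) in H by ring.
  rewrite <- H. rewrite Rmult_1_l. apply RInt_ext. intros x _. f_equal. ring.
Qed.

Lemma RInt_periodic (f : R -> R) (p c : R) : Cont f -> (forall x : R, f (x + p) = f x) ->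
  RInt f c (c + p) = RInt f 0 p.
Proof.
  intros Hf Hp. rewrite <- (Chas f c p (c + p)) by apply Hf.
  replace (RInt f p (c + p)) with (RInt f 0 c).
  rewrite Rplus_comm. apply Chas; apply Hf.
  replace p with (0 + p) at 1 by ring. rewrite (Rplus_comm c p).
  replace (p + c) with (c + p) by ring.
  rewrite <- RInt_shift by apply Hf. apply RInt_ext. intros; rewrite Hp; auto.
Qed.

Lemma RInt_periodic_nat (f : R -> R) (p c : R) (n : nat) : Cont f -> (forall x : R, f (x + p) = f x) ->
  RInt f c (c + INR n * p) = INR n * RInt f 0 p.
Proof.
  intros Hf Hp. induction n.
  - change (INR 0) with 0. rewrite Rmult_0_l, Rplus_0_r, RInt_point. unfold zero; simpl. ring.
  - rewrite S_INR. rewrite <- (Chas f c (c + INR n * p)) by apply Hf. rewrite IHn.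
    replace (c + (INR n + 1) * p) with ((c + INR n * p) + p) by ring.
    rewrite RInt_periodic; auto. rewrite Rmult_plus_distr_r, Rmult_1_l. reflexivity.
Qed.

Lemma RInt_periodic_Z (f : R -> R) (p c : R) (m : Z) : Cont f -> (forall x : R, f (x + p) = f x) ->
  RInt f c (c + IZR m * p) = IZR m * RInt f 0 p.
Proof.
  intros Hf Hp. destruct m as [|q|q].
  - change (IZR 0) with 0. rewrite Rmult_0_l, Rplus_0_r, RInt_point. unfold zero; simpl. ring.
  - rewrite <- positive_nat_Z, <- INR_IZR_INZ. apply RInt_periodic_nat; auto.
  - rewrite <- Pos2Z.opp_pos, opp_IZR, <- positive_nat_Z, <- INR_IZR_INZ.
    set (c' := c + - INR (Pos.to_nat q) * p).
    replace c with (c' + INR (Pos.to_nat q) * p) at 1 by (unfold c'; ring).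
    rewrite <- opp_RInt_swap by (apply cint, Hf).
    rewrite RInt_periodic_nat; auto. unfold opp; simpl. ring.
Qed.

Lemma periodic_Z (f : R -> R) (p : R) (m : Z) : (forall x : R, f (x + p) = f x) -> forall x : R, f (x + IZR m * p) = f x.
Proof.
  intros Hp.
  assert (Hn : forall (n : nat) (x : R), f (x + INR n * p) = f x).
  { induction n; intros x. simpl. f_equal; ring. rewrite S_INR.
    replace (x + (INR n + 1) * p) with ((x + INR n * p) + p) by ring. rewrite Hp. apply IHn. }
  intros x. destruct m as [|q|q].
  - simpl. f_equal; ring.
  - rewrite <- positive_nat_Z, <- INR_IZR_INZ. apply Hn.
  - rewrite <- Pos2Z.opp_pos, opp_IZR, <- positive_nat_Z, <- INR_IZR_INZ.
    rewrite <- (Hn (Pos.to_nat q) (x + - INR (Pos.to_nat q) * p)). f_equal; ring.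
Qed.
Definition hk (k phi : R) : R := / sqrt (1 - k ^ 2 * (sin phi) ^ 2).

Lemma rad_pos k phi : 0 <= k < 1 -> 0 < 1 - k ^ 2 * (sin phi) ^ 2 <= 1.
Proof.
  intros Hk. pose proof (SIN_bound phi) as Hs.
  assert (0 <= sin phi ^ 2 <= 1).
  { simpl. rewrite Rmult_1_r. split. apply Rle_0_sqr.
    destruct Hs as [Hs1 Hs2]. assert (0 <= (1 - sin phi) * (1 + sin phi)) by (apply Rmult_le_pos; lra). nra. }
  assert (0 <= k ^ 2 < 1).
  { simpl. rewrite Rmult_1_r. split. apply Rle_0_sqr. nra. }
  split. apply Rlt_le_trans with (1 - k^2 * 1). lra. apply Rplus_le_compat_l, Ropp_le_contravar, Rmult_le_compat_l; lra.
  assert (0 <= k ^ 2 * sin phi ^ 2) by (apply Rmult_le_pos; lra). lra.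
Qed.

Lemma hk_ge1 k phi : 0 <= k < 1 -> 1 <= hk k phi.
Proof.
  intros Hk. destruct (rad_pos k phi Hk) as [H1 H2]. unfold hk.
  assert (0 < sqrt (1 - k ^ 2 * sin phi ^ 2) <= 1).
  { split. apply sqrt_lt_R0; lra. rewrite <- sqrt_1 at 2. apply sqrt_le_1_alt; lra. }
  assert (/ 1 <= / sqrt (1 - k ^ 2 * sin phi ^ 2)) by (apply Rinv_le_contravar; lra). rewrite Rinv_1 in H0. exact H0.
Qed.

Lemma hk_deriv k phi : 0 <= k < 1 -> ex_derive (hk k) phi.
Proof.
  intros Hk. destruct (rad_pos k phi Hk) as [H1 H2]. unfold hk.
  auto_derive. split. lra. split; auto.
  apply Rgt_not_eq, sqrt_lt_R0; lra.
Qed.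

Lemma hk_cont k phi : 0 <= k < 1 -> continuous (hk k) phi.
Proof. intros; apply (@ex_derive_continuous R_AbsRing R_NormedModule), hk_deriv; auto. Qed.

Lemma hk_int k a b : 0 <= k < 1 -> ex_RInt (hk k) a b.
Proof. intros; apply (@ex_RInt_continuous R_CompleteNormedModule); intros; apply hk_cont; auto. Qed.

Lemma ell_F_deriv k t : 0 <= k < 1 -> is_derive (ell_F k) t (hk k t).
Proof.
  intros Hk. unfold ell_F. apply (is_derive_RInt (hk k) (fun t => RInt (hk k) 0 t) 0 t).
  exists (mkposreal 1 Rlt_0_1). intros y _. apply (@RInt_correct R_CompleteNormedModule). apply hk_int; auto.
  apply hk_cont; auto.
Qed.

Lemma ell_F_eq k t : ell_F k t = RInt (hk k) 0 t.
Proof. reflexivity. Qed.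

Lemma ell_F_diff k a b : 0 <= k < 1 -> ell_F k b - ell_F k a = RInt (hk k) a b.
Proof.
  intros Hk. rewrite !ell_F_eq. rewrite <- (RInt_Chasles (hk k) 0 a b); try apply hk_int; auto.
  simpl. change (plus (RInt (hk k) 0 a) (RInt (hk k) a b)) with (RInt (hk k) 0 a + RInt (hk k) a b). ring.
Qed.

Lemma ell_F_mono k a b : 0 <= k < 1 -> a <= b -> b - a <= ell_F k b - ell_F k a.
Proof.
  intros Hk Hab. rewrite ell_F_diff; auto.
  replace (b - a) with (RInt (fun _ => 1) a b).
  apply RInt_le; auto. apply ex_RInt_const. apply hk_int; auto.
  intros; apply hk_ge1; auto.
  rewrite RInt_const. simpl. unfold scal; simpl; unfold mult; simpl. ring.
Qed.

Lemma ell_F_0 k : ell_F k 0 = 0.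
Proof. unfold ell_F. rewrite RInt_point. reflexivity. Qed.

Lemma hk_Cont k : 0 <= k < 1 -> Cont (hk k).
Proof. intros Hk x; apply hk_cont; auto. Qed.

Lemma RInt_self (f : R -> R) a b : Cont f -> RInt f a b + RInt f b a = 0.
Proof. intros Hf. rewrite Chas by auto. rewrite RInt_point. reflexivity. Qed.

Lemma ell_F_Z k (m : Z) : 0 <= k < 1 -> ell_F k (IZR m * PI) = IZR m * ell_F k PI.
Proof.
  intros Hk. rewrite !ell_F_eq. replace (IZR m * PI) with (0 + IZR m * PI) by ring.
  apply RInt_periodic_Z. apply hk_Cont; auto.
  intros x. unfold hk. rewrite neg_sin. f_equal. f_equal. ring.
Qed.

Lemma ell_F_shift k t : 0 <= k < 1 -> ell_F k (t + PI) = ell_F k t + ell_F k PI.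
Proof.
  intros Hk. pose proof (ell_F_diff k t (t + PI) Hk) as H.
  rewrite RInt_periodic in H. rewrite <- ell_F_eq in H. lra.
  apply hk_Cont; auto.
  intros x. unfold hk. rewrite neg_sin. f_equal. f_equal. ring.
Qed.

Lemma ell_F_half k : 0 <= k < 1 -> ell_F k PI = 2 * ell_F k (PI / 2).
Proof.
  intros Hk. pose proof (RInt_scale (hk k) 0 (PI/2) (-1) PI (hk_Cont k Hk)) as H.
  replace (-1 * 0 + PI) with PI in H by ring. replace (-1 * (PI/2) + PI) with (PI/2) in H by field.
  rewrite (RInt_ext _ (hk k)) in H.
  2:{ intros x _. unfold hk. replace (-1 * x + PI) with (PI - x) by ring. rewrite sin_PI_x. reflexivity. }
  pose proof (RInt_self (hk k) PI (PI/2) (hk_Cont k Hk)) as H2.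
  pose proof (ell_F_diff k (PI/2) PI Hk) as H3.
  rewrite <- ell_F_eq in H. lra.
Qed.

Lemma ell_F_strict k a b : 0 <= k < 1 -> a < b -> ell_F k a < ell_F k b.
Proof. intros Hk Hab. pose proof (ell_F_mono k a b Hk (Rlt_le _ _ Hab)). lra. Qed.

Lemma ell_F_cont k t : 0 <= k < 1 -> continuous (ell_F k) t.
Proof.
  intros Hk. apply (@ex_derive_continuous R_AbsRing R_NormedModule).
  eexists. apply ell_F_deriv; auto.
Qed.

Lemma ell_F_surj k u : 0 <= k < 1 -> exists t, ell_F k t = u.
Proof.
  intros Hk.
  assert (Hc : continuity (ell_F k)).
  { intros x. apply continuity_pt_filterlim. apply ell_F_cont; auto. }
  destruct (Rle_dec 0 u) as [Hu|Hu].
  - pose proof (ell_F_mono k 0 u Hk Hu) as H. rewrite ell_F_0 in H.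
    assert (Hb : Rmin (ell_F k 0) (ell_F k u) <= u <= Rmax (ell_F k 0) (ell_F k u)).
    { rewrite ell_F_0. unfold Rmin, Rmax; destruct Rle_dec; lra. }
    destruct (IVT_gen (ell_F k) 0 u u Hc Hb) as [t [_ Ht]].
    exists t; auto.
  - pose proof (ell_F_mono k u 0 Hk ltac:(lra)) as H. rewrite ell_F_0 in H.
    assert (Hb : Rmin (ell_F k u) (ell_F k 0) <= u <= Rmax (ell_F k u) (ell_F k 0)).
    { rewrite ell_F_0. unfold Rmin, Rmax; destruct Rle_dec; lra. }
    destruct (IVT_gen (ell_F k) u 0 u Hc Hb) as [t [_ Ht]].
    exists t; auto.
Qed.

Lemma am_spec k u : 0 <= k < 1 -> ell_F k (jacobi_am k u) = u.
Proof.
  intros Hk. unfold jacobi_am. apply epsilon_spec. apply ell_F_surj; auto.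
Qed.

Lemma ell_F_inj k a b : 0 <= k < 1 -> ell_F k a = ell_F k b -> a = b.
Proof.
  intros Hk H. destruct (Rtotal_order a b) as [H1|[H1|H1]]; auto.
  apply (ell_F_strict k) in H1; auto; lra.
  apply (ell_F_strict k) in H1; auto; lra.
Qed.

Lemma am_ell k t : 0 <= k < 1 -> jacobi_am k (ell_F k t) = t.
Proof. intros Hk. apply (ell_F_inj k); auto. apply am_spec; auto. Qed.

Lemma am_lip k u v : 0 <= k < 1 -> Rabs (jacobi_am k u - jacobi_am k v) <= Rabs (u - v).
Proof.
  intros Hk.
  assert (forall a b, a <= b -> jacobi_am k b - jacobi_am k a <= ell_F k (jacobi_am k b) - ell_F k (jacobi_am k a)).
  { intros a b Hab. destruct (Rle_dec (jacobi_am k a) (jacobi_am k b)).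
    apply ell_F_mono; auto.
    rewrite !am_spec; auto. lra. }
  destruct (Rle_dec u v) as [Huv|Huv].
  - pose proof (H u v Huv) as H1. rewrite !am_spec in H1; auto.
    assert (jacobi_am k u <= jacobi_am k v).
    { destruct (Rle_dec (jacobi_am k u) (jacobi_am k v)); auto.
      pose proof (ell_F_strict k (jacobi_am k v) (jacobi_am k u) Hk ltac:(lra)). rewrite !am_spec in H0; auto. lra. }
    rewrite !Rabs_left1 by lra. lra.
  - pose proof (H v u ltac:(lra)) as H1. rewrite !am_spec in H1; auto.
    assert (jacobi_am k v <= jacobi_am k u).
    { destruct (Rle_dec (jacobi_am k v) (jacobi_am k u)); auto.
      pose proof (ell_F_strict k (jacobi_am k u) (jacobi_am k v) Hk ltac:(lra)). rewrite !am_spec in H0; auto. lra. }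
    rewrite !Rabs_right by lra. lra.
Qed.

Lemma am_cont k x : 0 <= k < 1 -> continuous (jacobi_am k) x.
Proof.
  intros Hk. apply continuity_pt_filterlim.
  unfold continuity_pt, continue_in, limit1_in, limit_in. intros eps Heps.
  exists eps. split; auto. intros y [_ Hy]. simpl in *. unfold R_dist in *.
  eapply Rle_lt_trans. apply am_lip; auto. auto.
Qed.

Lemma lip_cont (f : R -> R) (L : R) x : L > 0 -> (forall u v, Rabs (f u - f v) <= L * Rabs (u - v)) -> continuous f x.
Proof.
  intros HL Hf. apply continuity_pt_filterlim.
  unfold continuity_pt, continue_in, limit1_in, limit_in. intros eps Heps.
  exists (eps / L). split. apply Rdiv_lt_0_compat; auto. intros y [_ Hy]. simpl in *. unfold R_dist in *.
  eapply Rle_lt_trans. apply Hf. apply Rmult_lt_reg_r with (/ L). apply Rinv_0_lt_compat; auto.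
  replace (L * Rabs (y - x) * / L) with (Rabs (y - x)) by (field; lra). auto.
Qed.

Lemma am_0 k : 0 <= k < 1 -> jacobi_am k 0 = 0.
Proof. intros Hk. rewrite <- (ell_F_0 k) at 1. apply am_ell; auto. Qed.

Lemma am_shift k u : 0 <= k < 1 -> jacobi_am k (u + ell_F k PI) = jacobi_am k u + PI.
Proof.
  intros Hk. rewrite <- (am_spec k u Hk) at 1. rewrite <- ell_F_shift by auto. apply am_ell; auto.
Qed.

Lemma sn_zero k u : 0 <= k < 1 -> sin (jacobi_am k u) = 0 -> exists m : Z, u = IZR m * ell_F k PI.
Proof.
  intros Hk H. apply sin_eq_0_0 in H. destruct H as [m Hm]. exists m.
  rewrite <- (am_spec k u Hk), Hm. apply ell_F_Z; auto.
Qed.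

Lemma cont_comp_smooth (G h : R -> R) x : (forall y, ex_derive G y) -> continuous h x ->
  continuous (fun y => G (h y)) x.
Proof.
  intros HG Hh. apply (continuous_comp h G). auto.
  apply (@ex_derive_continuous R_AbsRing R_NormedModule). auto.
Qed.

Section Params.
Variable p : tparams.
Hypothesis Ha12 : pa1 p > pa2 p.
Hypothesis Ha2 : pa2 p > 0.
Hypothesis Hc2 : pc2 p <> 0.

Let a1 := pa1 p.
Let a2 := pa2 p.

Lemma a3_pos : par_a3 p > 0.
Proof.
  unfold par_a3. apply Rdiv_lt_0_compat.
  assert (0 < pc2 p ^ 2) by (apply pow2_gt_0; auto). pose proof (pow2_ge_0 (par_c1 p)). lra.
  apply Rmult_lt_0_compat; lra.
Qed.

Definition sq := sqrt (pa1 p + par_a3 p).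

Lemma sq_pos : sq > 0.
Proof. unfold sq. apply sqrt_lt_R0. pose proof a3_pos. lra. Qed.

Lemma k_range : 0 < par_k p < 1.
Proof.
  pose proof a3_pos. unfold par_k. split.
  apply Rdiv_lt_0_compat; lra.
  apply Rmult_lt_reg_r with (pa1 p + par_a3 p). lra. unfold Rdiv. rewrite Rmult_assoc, Rinv_l by lra. lra.
Qed.

Lemma k_range' : 0 <= par_k p < 1.
Proof. pose proof k_range; lra. Qed.

Lemma two_ev_form x : two_ev p x = a1 - (a1 - a2) * sin (jacobi_am (par_k p) (x * sq)) ^ 2.
Proof.
  unfold two_ev, jacobi_sn, sq, a1, a2. field. lra.
Qed.

Lemma Kpi : ell_F (par_k p) PI = period_T p * sq.
Proof.
  unfold period_T, sq. rewrite ell_F_half by apply k_range'. field.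
  pose proof sq_pos. unfold sq in H. lra.
Qed.

Lemma T_pos : period_T p > 0.
Proof.
  unfold period_T. apply Rdiv_lt_0_compat. 2: apply sq_pos.
  pose proof (ell_F_strict (par_k p) 0 (PI/2) k_range' ltac:(pose proof PI_RGT_0; lra)).
  rewrite ell_F_0 in H. lra.
Qed.

Lemma two_ev_cont : Cont (two_ev p).
Proof.
  intros x. apply continuous_ext with (fun y => (fun t => a1 - (a1 - a2) * sin t ^ 2) (jacobi_am (par_k p) (y * sq))).
  intros y. rewrite two_ev_form. reflexivity.
  apply (cont_comp_smooth (fun t => a1 - (a1 - a2) * sin t ^ 2) (fun y => jacobi_am (par_k p) (y * sq))). intros y. auto_derive. auto.
  apply lip_cont with sq. apply sq_pos. intros u v.
  eapply Rle_trans. apply am_lip, k_range'. replace (u * sq - v * sq) with (sq * (u - v)) by ring.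
  rewrite Rabs_mult, Rabs_right. lra. pose proof sq_pos; lra.
Qed.

Lemma two_ev_per x : two_ev p (x + period_T p) = two_ev p x.
Proof.
  rewrite !two_ev_form. replace ((x + period_T p) * sq) with (x * sq + ell_F (par_k p) PI) by (rewrite Kpi; ring).
  rewrite am_shift by apply k_range'. rewrite neg_sin. ring.
Qed.

Lemma two_ev_0 : two_ev p 0 = a1.
Proof. rewrite two_ev_form, Rmult_0_l, am_0, sin_0 by apply k_range'. ring. Qed.

Lemma two_ev_half : two_ev p (period_T p / 2) = a2.
Proof.
  rewrite two_ev_form. replace (period_T p / 2 * sq) with (ell_F (par_k p) (PI/2)).
  rewrite am_ell, sin_PI2 by apply k_range'. ring.
  pose proof sq_pos as Hs. unfold period_T. set (E := ell_F (par_k p) (PI / 2)). unfold sq in *. field. lra.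
Qed.

Lemma two_ev_bounds x : a2 <= two_ev p x <= a1.
Proof.
  rewrite two_ev_form. set (s := sin _). assert (0 <= s ^ 2 <= 1).
  { pose proof (SIN_bound (jacobi_am (par_k p) (x * sq))). fold s in H. simpl. rewrite Rmult_1_r.
    split. apply Rle_0_sqr. assert (0 <= (1 - s) * (1 + s)) by (apply Rmult_le_pos; lra). nra. }
  unfold a1, a2 in *. split; nra.
Qed.

Lemma two_ev_a1 w : two_ev p w = a1 -> exists m : Z, w = IZR m * period_T p.
Proof.
  intros H. rewrite two_ev_form in H.
  assert (sin (jacobi_am (par_k p) (w * sq)) = 0).
  { assert (sin (jacobi_am (par_k p) (w * sq)) ^ 2 = 0).
    { unfold a1, a2 in *. apply Rmult_eq_reg_l with (pa1 p - pa2 p). lra. lra. }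
    simpl in H0. rewrite Rmult_1_r in H0. apply Rmult_integral in H0. destruct H0; auto. }
  apply sn_zero in H0. destruct H0 as [m Hm]. exists m. rewrite Kpi in Hm.
  apply Rmult_eq_reg_r with sq. rewrite Hm. ring. pose proof sq_pos. lra. apply k_range'.
Qed.

Lemma two_ev_perZ (m : Z) x : two_ev p (x + IZR m * period_T p) = two_ev p x.
Proof. apply periodic_Z. apply two_ev_per. Qed.

End Params.

Lemma hk_lower k phi : 0 <= k < 1 -> hk k phi >= 1 + k ^ 2 * sin phi ^ 2 / 2.
Proof.
  intros Hk. destruct (rad_pos k phi Hk) as [H1 H2]. unfold hk.
  set (z := k ^ 2 * sin phi ^ 2) in *.
  set (r := sqrt (1 - z)).
  assert (Hr : 0 < r) by (apply sqrt_lt_R0; lra).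
  assert (Hr2 : r * r = 1 - z) by (apply sqrt_sqrt; lra).
  assert (Hr1 : r <= 1) by nra.
  replace z with (1 - r * r) by lra.
  apply Rle_ge. apply Rmult_le_reg_r with r. auto. rewrite Rinv_l by lra.
  assert (0 <= (1 - r) * (1 - r) * (2 + r)) by (apply Rmult_le_pos; nra). nra.
Qed.

Section Params2.
Variable p : tparams.
Hypothesis Ha12 : pa1 p > pa2 p.
Hypothesis Ha2 : pa2 p > 0.
Hypothesis Hc2 : pc2 p <> 0.

Lemma I_change : RInt (two_ev p) 0 (period_T p) =
  RInt (fun t => / sq p * hk (par_k p) t * (pa1 p - (pa1 p - pa2 p) * sin t ^ 2)) 0 PI.
Proof.
  pose proof (k_range' p Ha12 Ha2 Hc2) as Hk. pose proof (sq_pos p Ha12 Ha2 Hc2) as Hs.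
  pose proof (RInt_comp (two_ev p) (fun t => / sq p * ell_F (par_k p) t) (fun t => / sq p * hk (par_k p) t) 0 PI) as H.
  cbv beta in H. rewrite ell_F_0, Rmult_0_r, Kpi in H by auto.
  replace (/ sq p * (period_T p * sq p)) with (period_T p) in H by (field; lra).
  rewrite <- H.
  - apply RInt_ext. intros x _. unfold scal; simpl; unfold mult; simpl.
    rewrite two_ev_form by auto. replace (/ sq p * ell_F (par_k p) x * sq p) with (ell_F (par_k p) x) by (field; lra).
    rewrite am_ell by auto. ring.
  - intros x _. apply two_ev_cont; auto.
  - intros x _. split. apply is_derive_scal. apply ell_F_deriv; auto.
    apply (continuous_mult (fun _ => / sq p) (hk (par_k p))). apply continuous_const. apply hk_cont; auto.
Qed.

Lemma I_lower : RInt (two_ev p) 0 (period_T p) * sq p >= PI * (pa1 p + pa2 p) / 2 + pa2 p * par_k p ^ 2 * PI / 4.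
Proof.
  pose proof (k_range' p Ha12 Ha2 Hc2) as Hk. pose proof (sq_pos p Ha12 Ha2 Hc2) as Hs.
  rewrite I_change. set (k := par_k p). set (a1 := pa1 p). set (a2 := pa2 p).
  set (C := a1 - a2 - a2 * k ^ 2 / 2).
  assert (Hlow : RInt (fun t => / sq p * (a1 - C * sin t ^ 2)) 0 PI = / sq p * (a1 * PI - C * PI / 2)).
  { apply is_RInt_unique.
    pose proof (is_RInt_derive (fun t => / sq p * (a1 * t - C * (t - sin t * cos t) / 2))
       (fun t => / sq p * (a1 - C * sin t ^ 2)) 0 PI) as H.
    replace (/ sq p * (a1 * PI - C * PI / 2)) with
      (minus (/ sq p * (a1 * PI - C * (PI - sin PI * cos PI) / 2)) (/ sq p * (a1 * 0 - C * (0 - sin 0 * cos 0) / 2))).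
    apply H.
    - intros x _. auto_derive. auto. pose proof (sin2_cos2 x) as Hsc. unfold Rsqr in Hsc. simpl.
      apply Rmult_eq_compat_l. assert (HC : C * (sin x * sin x + cos x * cos x) = C * 1) by (rewrite Hsc; auto). lra.
    - intros x _. apply (@ex_derive_continuous R_AbsRing R_NormedModule). auto_derive. auto.
    - rewrite sin_PI, sin_0, cos_0. unfold minus, plus, opp; simpl. field. lra. }
  apply Rle_ge. apply Rmult_le_reg_r with (/ sq p). apply Rinv_0_lt_compat; lra.
  assert (HJ : forall J : R, J * sq p * / sq p = J) by (intros; field; lra). rewrite HJ.
  apply Rle_trans with (RInt (fun t => / sq p * (a1 - C * sin t ^ 2)) 0 PI).
  rewrite Hlow. unfold C. apply Req_le. field. lra.
  apply RInt_le. pose proof PI_RGT_0; lra.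
  apply cint. intros x. apply (@ex_derive_continuous R_AbsRing R_NormedModule). auto_derive. auto.
  apply cint. intros x. apply (continuous_mult (fun t => / sq p * hk k t) (fun t => a1 - (a1 - a2) * sin t ^ 2)).
  apply (continuous_mult (fun _ => / sq p) (hk k)). apply continuous_const. apply hk_cont; auto.
  apply (@ex_derive_continuous R_AbsRing R_NormedModule). auto_derive. auto.
  intros x _. rewrite Rmult_assoc. apply Rmult_le_compat_l. left; apply Rinv_0_lt_compat; lra.
  pose proof (hk_lower k x Hk) as Hh.
  assert (Hs2 : 0 <= sin x ^ 2 <= 1).
  { pose proof (SIN_bound x). simpl. rewrite Rmult_1_r.
    split. apply Rle_0_sqr. assert (0 <= (1 - sin x) * (1 + sin x)) by (apply Rmult_le_pos; lra). nra. }
  assert (HN : a2 <= a1 - (a1 - a2) * sin x ^ 2) by (unfold a1, a2 in *; nra).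
  assert (0 <= k ^ 2 * sin x ^ 2) by (apply Rmult_le_pos; [apply pow2_ge_0| lra]).
  assert (a2 > 0) by (unfold a2; lra).
  set (N := a1 - (a1 - a2) * sin x ^ 2) in *.
  assert (0 <= (hk k x - (1 + k ^ 2 * sin x ^ 2 / 2)) * N) by (apply Rmult_le_pos; lra).
  assert (0 <= (k ^ 2 * sin x ^ 2) * (N - a2)) by (apply Rmult_le_pos; lra).
  unfold C. unfold N in *. nra.
Qed.

End Params2.

Lemma cos_sin_2PIk (k : Z) : cos (2 * PI * IZR k) = 1 /\ sin (2 * PI * IZR k) = 0.
Proof.
  assert (H : sin (PI * IZR k) = 0) by (apply sin_eq_0_1; exists k; ring).
  replace (2 * PI * IZR k) with (2 * (PI * IZR k)) by ring.
  rewrite cos_2a_sin, sin_2a, H. split; ring.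
Qed.

Lemma cos_eq1 d : cos d = 1 -> exists k : Z, d = 2 * PI * IZR k.
Proof.
  intros H. replace d with (2 * (d / 2)) in H by field. rewrite cos_2a_sin in H.
  assert (sin (d / 2) = 0) by nra. apply sin_eq_0_0 in H0. destruct H0 as [k Hk].
  exists k. lra.
Qed.

Lemma polar_rot F th dl (k : Z) : polar F (th + dl + 2 * PI * IZR k) = Cmult (cos dl, sin dl) (polar F th).
Proof.
  destruct (cos_sin_2PIk k) as [Hc Hs]. unfold polar, Cmult; simpl.
  set (z := 2 * PI * IZR k) in *.
  rewrite (cos_plus (th + dl) z), (sin_plus (th + dl) z), Hc, Hs, cos_plus, sin_plus. f_equal; ring.
Qed.

Lemma polar_norm F F' th th' l : polar F' th' = Cmult l (polar F th) ->
  F' ^ 2 = (fst l ^ 2 + snd l ^ 2) * F ^ 2.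
Proof.
  destruct l as [l1 l2]. unfold polar, Cmult; simpl. intros H. injection H as H1 H2.
  pose proof (sin2_cos2 th) as E1. pose proof (sin2_cos2 th') as E2. unfold Rsqr in *.
  replace (F' * (F' * 1)) with ((F' * cos th') * (F' * cos th') + (F' * sin th') * (F' * sin th')).
  rewrite H1, H2.
  replace ((l1 * (F * cos th) - l2 * (F * sin th)) * (l1 * (F * cos th) - l2 * (F * sin th)) +
    (l1 * (F * sin th) + l2 * (F * cos th)) * (l1 * (F * sin th) + l2 * (F * cos th)))
   with ((l1 * l1 + l2 * l2) * (F * F) * (sin th * sin th + cos th * cos th)) by ring.
  rewrite E1. ring.
  replace (F' * cos th' * (F' * cos th') + F' * sin th' * (F' * sin th')) with (F' * F' * (sin th' * sin th' + cos th' * cos th')) by ring.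
  rewrite E2. ring.
Qed.

Lemma polar_phase F th th' l : F <> 0 -> polar F th' = Cmult l (polar F th) ->
  fst l = cos (th' - th) /\ snd l = sin (th' - th).
Proof.
  destruct l as [l1 l2]. unfold polar, Cmult; simpl. intros HF H. injection H as H1 H2.
  assert (C1 : cos th' = l1 * cos th - l2 * sin th).
  { apply Rmult_eq_reg_l with F; auto. rewrite H1. ring. }
  assert (C2 : sin th' = l1 * sin th + l2 * cos th).
  { apply Rmult_eq_reg_l with F; auto. rewrite H2. ring. }
  pose proof (sin2_cos2 th) as E1. unfold Rsqr in E1.
  rewrite cos_minus, sin_minus, C1, C2. split.
  replace ((l1 * cos th - l2 * sin th) * cos th + (l1 * sin th + l2 * cos th) * sin th) with (l1 * (sin th * sin th + cos th * cos th)) by ring.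
  rewrite E1; ring.
  replace ((l1 * sin th + l2 * cos th) * cos th - (l1 * cos th - l2 * sin th) * sin th) with (l2 * (sin th * sin th + cos th * cos th)) by ring.
  rewrite E1; ring.
Qed.

Lemma same_phase d1 d3 : cos d1 = cos d3 -> sin d1 = sin d3 -> exists k : Z, d1 - d3 = 2 * PI * IZR k.
Proof.
  intros H1 H2. apply cos_eq1. rewrite cos_minus, H1, H2.
  pose proof (sin2_cos2 d3) as E. unfold Rsqr in E. lra.
Qed.

Lemma lagrange (b1 b2 b3 e : R) : b1 <> b2 -> b1 <> b3 -> b2 <> b3 ->
  (e + b2 * b3) / ((b1 - b2) * (b1 - b3)) + (e + b3 * b1) / ((b2 - b3) * (b2 - b1))
  + (e + b1 * b2) / ((b3 - b1) * (b3 - b2)) = 1.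
Proof.
  intros. field. repeat split; intro; apply H || apply H0 || apply H1; lra.
Qed.

Lemma cont_comp_loc (G h : R -> R) x : ex_derive G (h x) -> continuous h x ->
  continuous (fun y => G (h y)) x.
Proof.
  intros HG Hh. apply (continuous_comp h G). auto.
  apply (@ex_derive_continuous R_AbsRing R_NormedModule). auto.
Qed.

Definition gint (p : tparams) (ai z : R) : R :=
  (pc2 p - par_a p * ev p z) / (2 * ai * ev p z - par_c1 p).

Section Params3.
Variable p : tparams.
Hypothesis Ha12 : pa1 p > pa2 p.
Hypothesis Ha2 : pa2 p > 0.
Hypothesis Hc2 : pc2 p <> 0.

Lemma gint_cont ai : (forall x, 2 * ai * ev p x - par_c1 p <> 0) -> Cont (gint p ai).
Proof.
  intros Hd x.
  apply (cont_comp_loc (fun e => (pc2 p - par_a p * (e / 2)) / (2 * ai * (e / 2) - par_c1 p)) (two_ev p) x).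
  - auto_derive. apply Hd.
  - apply two_ev_cont; auto.
Qed.

Lemma ev_perZ (m : Z) x : ev p (x + IZR m * period_T p) = ev p x.
Proof. unfold ev. rewrite two_ev_perZ; auto. Qed.

Lemma G_per ai (m : Z) x : (forall x, 2 * ai * ev p x - par_c1 p <> 0) ->
  G_phase p ai (x + IZR m * period_T p) = G_phase p ai x + IZR m * G_phase p ai (period_T p).
Proof.
  intros Hd. unfold G_phase. fold (gint p ai).
  rewrite <- (Chas (gint p ai) 0 x) by (apply gint_cont; auto).
  rewrite RInt_periodic_Z. ring. apply gint_cont; auto.
  intros y. unfold gint. replace (y + period_T p) with (y + IZR 1 * period_T p) by ring. rewrite ev_perZ. reflexivity.
Qed.

Lemma F_perZ ai aj ak (m : Z) x : F_coef p ai aj ak (x + IZR m * period_T p) = F_coef p ai aj ak x.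
Proof. unfold F_coef, F_radicand. rewrite ev_perZ. reflexivity. Qed.

End Params3.

Lemma rad_form p ai aj ak x : F_radicand p ai aj ak x = (two_ev p x + aj * ak) / ((ai - aj) * (ai - ak)).
Proof. unfold F_radicand, ev. f_equal. field. Qed.

Lemma div_nz a b : a <> 0 -> b <> 0 -> a / b <> 0.
Proof. intros Ha Hb H. unfold Rdiv in H. apply Rmult_integral in H. destruct H; auto. apply Rinv_neq_0_compat in Hb; auto. Qed.

Section Params4.
Variable p : tparams.
Hypothesis Ha12 : pa1 p > pa2 p.
Hypothesis Ha2 : pa2 p > 0.
Hypothesis Hc2 : pc2 p <> 0.
Hypothesis D12 : al1 p <> al2 p.
Hypothesis D13 : al1 p <> al3 p.
Hypothesis D23 : al2 p <> al3 p.

Lemma good_x : exists x0, F_radicand p (al1 p) (al2 p) (al3 p) x0 <> 0 /\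
  F_radicand p (al2 p) (al3 p) (al1 p) x0 <> 0 /\ F_radicand p (al3 p) (al1 p) (al2 p) x0 <> 0.
Proof.
  set (e1 := al2 p * al3 p). set (e2 := al3 p * al1 p). set (e3 := al1 p * al2 p).
  set (f := fun v => (v + e1) * (v + e2) * (v + e3)).
  set (h := (pa1 p - pa2 p) / 5).
  assert (Hh : h > 0) by (unfold h; lra).
  assert (Hid : f (pa2 p + 4 * h) - 3 * f (pa2 p + 3 * h) + 3 * f (pa2 p + 2 * h) - f (pa2 p + 1 * h) = 6 * h ^ 3)
    by (unfold f; ring).
  assert (Hv : exists v, pa2 p <= v <= pa1 p /\ f v <> 0).
  { destruct (classic (f (pa2 p + 1 * h) = 0)) as [E1|E1].
    2:{ exists (pa2 p + 1 * h). split; auto. unfold h; lra. }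
    destruct (classic (f (pa2 p + 2 * h) = 0)) as [E2|E2].
    2:{ exists (pa2 p + 2 * h). split; auto. unfold h; lra. }
    destruct (classic (f (pa2 p + 3 * h) = 0)) as [E3|E3].
    2:{ exists (pa2 p + 3 * h). split; auto. unfold h; lra. }
    destruct (classic (f (pa2 p + 4 * h) = 0)) as [E4|E4].
    2:{ exists (pa2 p + 4 * h). split; auto. unfold h; lra. }
    exfalso. rewrite E1, E2, E3, E4 in Hid. assert (0 < h ^ 3) by (apply pow_lt; auto). lra. }
  destruct Hv as [v [Hv1 Hv2]].
  assert (Hc : continuity (two_ev p)).
  { intros x. apply continuity_pt_filterlim. apply two_ev_cont; auto. }
  assert (Hb : Rmin (two_ev p 0) (two_ev p (period_T p / 2)) <= v <= Rmax (two_ev p 0) (two_ev p (period_T p / 2))).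
  { rewrite two_ev_0, two_ev_half by auto. unfold Rmin, Rmax; destruct Rle_dec; lra. }
  destruct (IVT_gen (two_ev p) 0 (period_T p / 2) v Hc Hb) as [x0 [_ Hx0]].
  exists x0. rewrite !rad_form, Hx0.
  unfold f in Hv2.
  split; [|split]; apply div_nz.
  - intro E. apply Hv2. unfold e1 in *. rewrite E. ring.
  - intro E. apply Rmult_integral in E. destruct E; lra.
  - intro E. apply Hv2. unfold e2 in *. rewrite E. ring.
  - intro E. apply Rmult_integral in E. destruct E; lra.
  - intro E. apply Hv2. unfold e3 in *. rewrite E. ring.
  - intro E. apply Rmult_integral in E. destruct E; lra.
Qed.

End Params4.

Definition Aph p := G1 p (period_T p) - G3 p (period_T p).
Definition Bph p := G2 p (period_T p) - G3 p (period_T p).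
Definition Lset p (d1 d2 m : Z) (s : R) :=
  (exists k1 : Z, IZR m * Aph p + IZR d1 * s = 2 * PI * IZR k1) /\
  (exists k2 : Z, IZR m * Bph p + IZR d2 * s = 2 * PI * IZR k2).

Lemma sqrt_sq2 r : 0 <= r -> sqrt r ^ 2 = r.
Proof. intros; apply pow2_sqrt; auto. Qed.

Section Params5.
Variable p : tparams.
Hypothesis Ha12 : pa1 p > pa2 p.
Hypothesis Ha2 : pa2 p > 0.
Hypothesis Hc2 : pc2 p <> 0.
Hypothesis D12 : al1 p <> al2 p.
Hypothesis D13 : al1 p <> al3 p.
Hypothesis D23 : al2 p <> al3 p.
Hypothesis Hr1 : forall x, 0 <= F_radicand p (al1 p) (al2 p) (al3 p) x.
Hypothesis Hr2 : forall x, 0 <= F_radicand p (al2 p) (al3 p) (al1 p) x.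
Hypothesis Hr3 : forall x, 0 <= F_radicand p (al3 p) (al1 p) (al2 p) x.
Hypothesis Hd1 : forall x, 2 * al1 p * ev p x - par_c1 p <> 0.
Hypothesis Hd2 : forall x, 2 * al2 p * ev p x - par_c1 p <> 0.
Hypothesis Hd3 : forall x, 2 * al3 p * ev p x - par_c1 p <> 0.
Variables d1 d2 : Z.
Hypothesis Hz1 : IZR d1 = al1 p - al3 p.
Hypothesis Hz2 : IZR d2 = al2 p - al3 p.

Lemma rad_sum x : F_radicand p (al1 p) (al2 p) (al3 p) x + F_radicand p (al2 p) (al3 p) (al1 p) x
  + F_radicand p (al3 p) (al1 p) (al2 p) x = 1.
Proof. rewrite !rad_form. apply lagrange; auto. Qed.

Lemma period_fwd w1 w2 : period_set p (w1, w2) ->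
  exists m : Z, w1 = IZR m * period_T p /\ Lset p d1 d2 m w2.
Proof.
  intros Hp. unfold period_set in Hp; simpl in Hp.
  assert (Hw1 : exists m : Z, w1 = IZR m * period_T p).
  { destruct (Hp 0 0) as [l [Hl [H1 [H2 H3]]]]. unfold psi in H1, H2, H3. simpl in H1, H2, H3.
    rewrite Rplus_0_l in H1, H2, H3.
    apply polar_norm in H1. apply polar_norm in H2. apply polar_norm in H3.
    unfold F1, F2, F3, F_coef in H1, H2, H3. rewrite !sqrt_sq2 in H1, H2, H3 by auto.
    pose proof (rad_sum 0) as S0. pose proof (rad_sum w1) as S1.
    set (N := fst l ^ 2 + snd l ^ 2) in *.
    assert (HN : N = 1).
    { rewrite H1, H2, H3 in S1.
      set (u1 := F_radicand p (al1 p) (al2 p) (al3 p) 0) in *.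
      set (u2 := F_radicand p (al2 p) (al3 p) (al1 p) 0) in *.
      set (u3 := F_radicand p (al3 p) (al1 p) (al2 p) 0) in *.
      replace (N * u1 + N * u2 + N * u3) with (N * (u1 + u2 + u3)) in S1 by ring.
      rewrite S0, Rmult_1_r in S1. exact S1. }
    rewrite HN, Rmult_1_l in H1. rewrite !rad_form in H1.
    assert (two_ev p w1 = two_ev p 0).
    { assert (Hden : (al1 p - al2 p) * (al1 p - al3 p) <> 0).
      { intro E. apply Rmult_integral in E. destruct E; lra. }
      apply (Rmult_eq_compat_r ((al1 p - al2 p) * (al1 p - al3 p))) in H1.
      unfold Rdiv in H1. rewrite !Rmult_assoc, !Rinv_l in H1 by auto. lra. }
    apply (two_ev_a1 p Ha12 Ha2 Hc2). rewrite H. apply (two_ev_0 p Ha12 Ha2 Hc2). }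
  destruct Hw1 as [m Hm]. exists m. split; auto. subst w1.
  destruct (good_x p Ha12 Ha2 Hc2 D12 D13 D23) as [x0 [N1 [N2 N3]]].
  destruct (Hp x0 0) as [l [Hl [H1 [H2 H3]]]]. unfold psi in H1, H2, H3. simpl in H1, H2, H3.
  unfold F1, F2, F3, G1, G2, G3 in H1, H2, H3.
  rewrite F_perZ in H1, H2, H3 by auto.
  rewrite G_per in H1 by auto. rewrite G_per in H2 by auto. rewrite G_per in H3 by auto.
  assert (Fnz : forall r, 0 <= r -> r <> 0 -> sqrt r <> 0).
  { intros r Hr Hr0 E. apply Hr0. apply sqrt_eq_0; auto. }
  apply polar_phase in H1. 2: unfold F_coef; apply Fnz; auto.
  apply polar_phase in H2. 2: unfold F_coef; apply Fnz; auto.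
  apply polar_phase in H3. 2: unfold F_coef; apply Fnz; auto.
  destruct H1 as [C1 S1]. destruct H2 as [C2 S2]. destruct H3 as [C3 S3].
  split.
  - destruct (same_phase _ _ (eq_trans (eq_sym C1) C3) (eq_trans (eq_sym S1) S3)) as [k Hk].
    exists k. rewrite <- Hk. unfold Aph, G1, G3. rewrite Hz1. ring.
  - destruct (same_phase _ _ (eq_trans (eq_sym C2) C3) (eq_trans (eq_sym S2) S3)) as [k Hk].
    exists k. rewrite <- Hk. unfold Bph, G2, G3. rewrite Hz2. ring.
Qed.

Lemma period_bwd (m : Z) w2 : Lset p d1 d2 m w2 -> period_set p (IZR m * period_T p, w2).
Proof.
  intros [[k1 Hk1] [k2 Hk2]] x y. simpl.
  set (dl := IZR m * G3 p (period_T p) + al3 p * w2).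
  exists (cos dl, sin dl). split.
  { intro E. injection E as E1 E2. pose proof (sin2_cos2 dl) as Hs. unfold Rsqr in Hs.
    rewrite E1, E2 in Hs. lra. }
  unfold psi; simpl. unfold F1, F2, F3, G1, G2, G3 in *.
  rewrite !F_perZ by auto.
  rewrite G_per by auto. rewrite G_per by auto. rewrite G_per by auto.
  split; [|split].
  - replace (G_phase p (al1 p) x + IZR m * G_phase p (al1 p) (period_T p) + al1 p * (y + w2))
      with (G_phase p (al1 p) x + al1 p * y + dl + 2 * PI * IZR k1).
    apply polar_rot.
    rewrite <- Hk1. unfold dl, Aph, G1, G3. rewrite Hz1. ring.
  - replace (G_phase p (al2 p) x + IZR m * G_phase p (al2 p) (period_T p) + al2 p * (y + w2))
      with (G_phase p (al2 p) x + al2 p * y + dl + 2 * PI * IZR k2).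
    apply polar_rot.
    rewrite <- Hk2. unfold dl, Bph, G2, G3. rewrite Hz2. ring.
  - replace (G_phase p (al3 p) x + IZR m * G_phase p (al3 p) (period_T p) + al3 p * (y + w2))
      with (G_phase p (al3 p) x + al3 p * y + dl + 2 * PI * IZR 0).
    apply polar_rot.
    unfold dl, G3. simpl. ring.
Qed.

End Params5.

Lemma min_pos (P : Z -> Prop) : (exists q, (0 < q)%Z /\ P q) ->
  exists n, (0 < n)%Z /\ P n /\ forall m, (0 < m < n)%Z -> ~ P m.
Proof.
  intros [q [Hq Pq]].
  assert (Hind : forall N : nat, forall q, (0 < q)%Z -> (Z.to_nat q <= N)%nat -> P q ->
     exists n, (0 < n)%Z /\ P n /\ forall m, (0 < m < n)%Z -> ~ P m).
  { induction N; intros q0 H0 HN Pq0.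
    - exfalso. lia.
    - destruct (classic (exists m, (0 < m < q0)%Z /\ P m)) as [[m [Hm Pm]]|Hno].
      + apply (IHN m); auto. lia. lia.
      + exists q0. split; auto. split; auto. intros m Hm Pm. apply Hno. exists m; auto. }
  apply (Hind (Z.to_nat q) q); auto.
Qed.

Lemma lattice_struct (Ls : Z -> R -> Prop)
  (Hadd : forall m s m' s', Ls m s -> Ls m' s' -> Ls (m + m')%Z (s + s'))
  (Hsc : forall z m s, Ls m s -> Ls (z * m)%Z (IZR z * s))
  (H0 : forall b, Ls 0%Z (2 * PI * IZR b))
  (H0' : forall s, Ls 0%Z s -> exists b, s = 2 * PI * IZR b)
  (Hq : exists q s, (0 < q)%Z /\ Ls q s) :
  exists n t0, (0 < n)%Z /\ Ls n t0 /\ forall m s, Ls m s <-> exists j i : Z, m = (j * n)%Z /\ s = IZR j * t0 + 2 * PI * IZR i.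
Proof.
  destruct (min_pos (fun q => exists s, Ls q s)) as [n [Hn [[t0 Ht0] Hmin]]].
  { destruct Hq as [q [s [Hq Hs]]]. exists q; split; auto. exists s; auto. }
  exists n, t0. split; auto. split; auto. intros m s. split.
  - intros Hms. set (j := (m / n)%Z). set (r := (m mod n)%Z).
    assert (Hr : (0 <= r < n)%Z) by (apply Z.mod_pos_bound; lia).
    assert (Hm : m = (n * j + r)%Z) by (apply Z.div_mod; lia).
    assert (Lr : Ls r (s + IZR (- j) * t0)).
    { replace r with (m + (- j) * n)%Z by lia. apply Hadd; auto. }
    assert (r = 0%Z).
    { destruct (Z.eq_dec r 0); auto. exfalso. apply (Hmin r). lia. exists (s + IZR (- j) * t0); auto. }
    rewrite H in Lr. apply H0' in Lr. destruct Lr as [i Hi].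
    exists j, i. split. lia. rewrite opp_IZR in Hi. lra.
  - intros [j [i [Hm Hs]]]. subst.
    pose proof (Hadd _ _ _ _ (Hsc j n t0 Ht0) (H0 i)) as H. rewrite Z.add_0_r in H. exact H.
Qed.

Lemma avg_Z (g : R -> R) (T : R) (j : Z) (c : R) : Cont g -> (forall x, g (x + T) = g x) -> T > 0 -> j <> 0%Z ->
  RInt (fun t => g (c + t * (IZR j * T))) 0 1 = RInt g 0 T / T.
Proof.
  intros Hg Hp HT Hj.
  assert (Hj' : IZR j <> 0) by (apply not_0_IZR; auto).
  pose proof (RInt_scale g 0 1 (IZR j * T) c Hg) as H.
  replace (IZR j * T * 0 + c) with c in H by ring.
  replace (IZR j * T * 1 + c) with (c + IZR j * T) in H by ring.
  rewrite RInt_periodic_Z in H by auto.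
  rewrite (RInt_ext _ (fun y => g (IZR j * T * y + c))).
  2:{ intros x _. f_equal. ring. }
  set (J := RInt (fun y => g (IZR j * T * y + c)) 0 1) in *.
  assert (Hr : forall (a b : R), IZR j * T * a = IZR j * b -> a = b / T).
  { intros a b E. apply Rmult_eq_reg_l with (IZR j * T). rewrite E. field. lra.
    apply Rmult_integral_contrapositive; split; lra. }
  apply Hr. exact H.
Qed.

Lemma dbl_avg (g : R -> R) (T : R) (m1 m2 : Z) : Cont g -> (forall x, g (x + T) = g x) -> T > 0 ->
  (m1 <> 0 \/ m2 <> 0)%Z ->
  RInt (fun s => RInt (fun t => g (s * (IZR m1 * T) + t * (IZR m2 * T))) 0 1) 0 1 = RInt g 0 T / T.
Proof.
  intros Hg Hp HT Hm.
  destruct (Z.eq_dec m2 0) as [E|E].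
  - subst m2. destruct Hm as [Hm|Hm]; [|lia].
    rewrite (RInt_ext _ (fun s => g (0 + s * (IZR m1 * T)))).
    apply avg_Z; auto.
    intros x _. rewrite (RInt_ext _ (fun _ => g (0 + x * (IZR m1 * T)))).
    rewrite RInt_const. unfold scal; simpl; unfold mult; simpl. ring.
    intros y _. f_equal. simpl. ring.
  - rewrite (RInt_ext _ (fun _ => RInt g 0 T / T)).
    rewrite RInt_const. unfold scal; simpl; unfold mult; simpl. ring.
    intros x _. apply avg_Z; auto.
Qed.

Theorem lemma1 (alpha1 alpha2 alpha3 : Z) (a1 a2 c2 : R) :
  let p := TParams (IZR alpha1) (IZR alpha2) (IZR alpha3) a1 a2 c2 in
  Z.gcd (alpha1 - alpha3) (alpha2 - alpha3) = 1%Z ->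
  alpha1 <> alpha2 -> alpha1 <> alpha3 -> alpha2 <> alpha3 ->
  a1 > a2 -> a2 > 0 ->
  par_P p <= 0 ->
  par_P p ^ 2 - (a1 - a2) ^ 2 * par_Q p ^ 2 >= 0 ->
  (a1 - a2) ^ 2 * c2 ^ 4 + 2 * par_P p * c2 ^ 2 + par_Q p ^ 2 = 0 ->
  c2 <> 0 ->
  (forall x, 0 <= F_radicand p (IZR alpha1) (IZR alpha2) (IZR alpha3) x) ->
  (forall x, 0 <= F_radicand p (IZR alpha2) (IZR alpha3) (IZR alpha1) x) ->
  (forall x, 0 <= F_radicand p (IZR alpha3) (IZR alpha1) (IZR alpha2) x) ->
  (forall x, 2 * IZR alpha1 * ev p x - par_c1 p <> 0) ->
  (forall x, 2 * IZR alpha2 * ev p x - par_c1 p <> 0) ->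
  (forall x, 2 * IZR alpha3 * ev p x - par_c1 p <> 0) ->
  (exists tau : R,
     is_rational ((G1 p (period_T p) - G3 p (period_T p)
                   + (IZR alpha1 - IZR alpha3) * tau) / (2 * PI)) /\
     is_rational ((G2 p (period_T p) - G3 p (period_T p)
                   + (IZR alpha2 - IZR alpha3) * tau) / (2 * PI))) ->
  (exists w1 w2 : R * R, is_lattice_basis (period_set p) w1 w2) /\
  (forall w1 w2 : R * R, is_lattice_basis (period_set p) w1 w2 ->
     torus_area p w1 w2 > PI ^ 2 * (a1 + a2) / sqrt (a1 + par_a3 p)).
Proof.
  intros p Hgcd H12 H13 H23 Ha12 Ha2 _ _ _ Hc2 Hr1 Hr2 Hr3 Hd1 Hd2 Hd3 [tau [[q1 Hq1] [q2 Hq2]]].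
  assert (D12 : al1 p <> al2 p) by (simpl; intro E; apply eq_IZR in E; auto).
  assert (D13 : al1 p <> al3 p) by (simpl; intro E; apply eq_IZR in E; auto).
  assert (D23 : al2 p <> al3 p) by (simpl; intro E; apply eq_IZR in E; auto).
  set (d1 := (alpha1 - alpha3)%Z). set (d2 := (alpha2 - alpha3)%Z).
  assert (Hz1 : IZR d1 = al1 p - al3 p) by (unfold d1; rewrite minus_IZR; reflexivity).
  assert (Hz2 : IZR d2 = al2 p - al3 p) by (unfold d2; rewrite minus_IZR; reflexivity).
  assert (Ha12' : pa1 p > pa2 p) by exact Ha12.
  assert (Ha2' : pa2 p > 0) by exact Ha2.
  assert (Hc2' : pc2 p <> 0) by exact Hc2.
  pose proof (T_pos p Ha12' Ha2' Hc2') as HT.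
  pose proof PI_RGT_0 as HPI.
  set (T := period_T p) in *.
  set (Ls := Lset p d1 d2).
  assert (Pchar : forall w, period_set p w <-> exists m : Z, fst w = IZR m * T /\ Ls m (snd w)).
  { intros [w1 w2]. simpl. split.
    - intros H. apply (period_fwd p Ha12' Ha2' Hc2' D12 D13 D23 Hr1 Hr2 Hr3 Hd1 Hd2 Hd3 d1 d2 Hz1 Hz2); auto.
    - intros [m [Hm HL]]. subst w1.
      apply (period_bwd p Ha12' Ha2' Hc2' Hd1 Hd2 Hd3 d1 d2 Hz1 Hz2); auto. }
  assert (Hadd : forall m s m' s', Ls m s -> Ls m' s' -> Ls (m + m')%Z (s + s')).
  { intros m s m' s' [[k1 E1] [k2 E2]] [[k1' E1'] [k2' E2']]. split.
    exists (k1 + k1')%Z. rewrite !plus_IZR. lra.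
    exists (k2 + k2')%Z. rewrite !plus_IZR. lra. }
  assert (Hsc : forall z m s, Ls m s -> Ls (z * m)%Z (IZR z * s)).
  { intros z m s [[k1 E1] [k2 E2]]. split.
    exists (z * k1)%Z. rewrite !mult_IZR.
    replace (IZR z * IZR m * Aph p + IZR d1 * (IZR z * s)) with (IZR z * (IZR m * Aph p + IZR d1 * s)) by ring.
    rewrite E1. ring.
    exists (z * k2)%Z. rewrite !mult_IZR.
    replace (IZR z * IZR m * Bph p + IZR d2 * (IZR z * s)) with (IZR z * (IZR m * Bph p + IZR d2 * s)) by ring.
    rewrite E2. ring. }
  assert (H0 : forall b, Ls 0%Z (2 * PI * IZR b)).
  { intros b. split. exists (d1 * b)%Z. rewrite mult_IZR. simpl. ring.
    exists (d2 * b)%Z. rewrite mult_IZR. simpl. ring. }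
  assert (H0' : forall s, Ls 0%Z s -> exists b, s = 2 * PI * IZR b).
  { intros s [[k1 E1] [k2 E2]]. simpl in E1, E2.
    destruct (Z.gcd_bezout _ _ _ Hgcd) as [u [v Huv]].
    exists (u * k1 + v * k2)%Z.
    assert (IZR (u * (alpha1 - alpha3) + v * (alpha2 - alpha3)) = 1) by (rewrite Huv; reflexivity).
    rewrite plus_IZR, !mult_IZR in H. fold d1 d2 in H.
    rewrite plus_IZR, !mult_IZR.
    replace s with (s * (IZR u * IZR d1 + IZR v * IZR d2)) by (rewrite H; ring).
    replace (2 * PI * (IZR u * IZR k1 + IZR v * IZR k2)) with (IZR u * (2 * PI * IZR k1) + IZR v * (2 * PI * IZR k2)) by ring.
    rewrite <- E1, <- E2. ring. }
  assert (Hq : exists q s, (0 < q)%Z /\ Ls q s).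
  { set (D1 := Z.pos (Qden q1)). set (D2 := Z.pos (Qden q2)).
    exists (D1 * D2)%Z, (IZR (D1 * D2) * tau). split. lia.
    unfold Q2R in Hq1, Hq2. fold D1 in Hq1. fold D2 in Hq2.
    assert (HD1 : IZR D1 > 0) by (apply IZR_lt; lia).
    assert (HD2 : IZR D2 > 0) by (apply IZR_lt; lia).
    split.
    - exists (D2 * Qnum q1)%Z. rewrite !mult_IZR. unfold Aph. rewrite Hz1.
      apply (Rmult_eq_compat_r (2 * PI * IZR D1)) in Hq1.
      replace ((G1 p (T) - G3 p (T) + (IZR alpha1 - IZR alpha3) * tau) / (2 * PI) * (2 * PI * IZR D1))
        with ((G1 p (T) - G3 p (T) + (IZR alpha1 - IZR alpha3) * tau) * IZR D1) in Hq1 by (field; lra).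
      replace (IZR (Qnum q1) * / IZR D1 * (2 * PI * IZR D1)) with (2 * PI * IZR (Qnum q1)) in Hq1 by (field; lra).
      simpl al1. simpl al3. fold T.
      replace (IZR D1 * IZR D2 * (G1 p (T) - G3 p (T)) + (IZR alpha1 - IZR alpha3) * (IZR D1 * IZR D2 * tau))
        with (IZR D2 * ((G1 p (T) - G3 p (T) + (IZR alpha1 - IZR alpha3) * tau) * IZR D1)) by ring.
      rewrite Hq1. ring.
    - exists (D1 * Qnum q2)%Z. rewrite !mult_IZR. unfold Bph. rewrite Hz2.
      apply (Rmult_eq_compat_r (2 * PI * IZR D2)) in Hq2.
      replace ((G2 p (T) - G3 p (T) + (IZR alpha2 - IZR alpha3) * tau) / (2 * PI) * (2 * PI * IZR D2))
        with ((G2 p (T) - G3 p (T) + (IZR alpha2 - IZR alpha3) * tau) * IZR D2) in Hq2 by (field; lra).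
      replace (IZR (Qnum q2) * / IZR D2 * (2 * PI * IZR D2)) with (2 * PI * IZR (Qnum q2)) in Hq2 by (field; lra).
      simpl al2. simpl al3. fold T.
      replace (IZR D1 * IZR D2 * (G2 p (T) - G3 p (T)) + (IZR alpha2 - IZR alpha3) * (IZR D1 * IZR D2 * tau))
        with (IZR D1 * ((G2 p (T) - G3 p (T) + (IZR alpha2 - IZR alpha3) * tau) * IZR D2)) by ring.
      rewrite Hq2. ring. }
  destruct (lattice_struct Ls Hadd Hsc H0 H0' Hq) as [n [t0 [Hn [Ht0 HLs]]]].
  assert (Hn' : IZR n >= 1) by (apply Rle_ge; apply IZR_le; lia).
  split.
  - exists (IZR n * T, t0), (0, 2 * PI). split.
    + unfold det2; simpl. intro E. assert (IZR n * T * (2 * PI) = 0) by lra.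
      apply Rmult_integral in H. destruct H as [H|H]; [apply Rmult_integral in H; destruct H|]; lra.
    + intros w. rewrite Pchar. split.
      * intros [m [Hm HL]]. apply HLs in HL. destruct HL as [j [i [Hj Hi]]].
        exists j, i. destruct w as [w1 w2]; simpl in *. rewrite Hm, Hi, Hj, mult_IZR. f_equal; ring.
      * intros [j [i Hw]]. exists (j * n)%Z. rewrite Hw; simpl. split. rewrite mult_IZR; ring.
        apply HLs. exists j, i. split; auto. ring.
  - intros w1 w2 [Hdet Hb].
    assert (Hw1 : period_set p w1) by (apply Hb; exists 1%Z, 0%Z; destruct w1; simpl; f_equal; ring).
    assert (Hw2 : period_set p w2) by (apply Hb; exists 0%Z, 1%Z; destruct w2; simpl; f_equal; ring).
    apply Pchar in Hw1. apply Pchar in Hw2.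
    destruct Hw1 as [m1 [Hm1 L1]]. destruct Hw2 as [m2 [Hm2 L2]].
    apply HLs in L1. apply HLs in L2.
    destruct L1 as [j1 [i1 [Hj1 Hi1]]]. destruct L2 as [j2 [i2 [Hj2 Hi2]]].
    assert (Hdet' : det2 w1 w2 = 2 * PI * IZR n * T * IZR (j1 * i2 - i1 * j2)).
    { unfold det2. rewrite Hm1, Hm2, Hi1, Hi2, Hj1, Hj2, minus_IZR, !mult_IZR. ring. }
    assert (Hz : (j1 * i2 - i1 * j2)%Z <> 0%Z).
    { intro E. apply Hdet. rewrite Hdet', E. simpl. ring. }
    assert (Hz' : Rabs (IZR (j1 * i2 - i1 * j2)) >= 1).
    { destruct (Z_lt_le_dec 0 (j1 * i2 - i1 * j2)) as [Hl|Hl].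
      rewrite Rabs_right. apply Rle_ge, IZR_le. lia. apply Rle_ge, IZR_le. lia.
      rewrite Rabs_left. assert (IZR (j1 * i2 - i1 * j2) <= -1) by (apply IZR_le; lia). lra.
      apply IZR_lt. lia. }
    assert (Habs : Rabs (det2 w1 w2) >= 2 * PI * T).
    { rewrite Hdet', Rabs_mult, (Rabs_right (2 * PI * IZR n * T)).
      2: { apply Rle_ge. assert (0 < 2 * PI * T) by (apply Rmult_lt_0_compat; lra). nra. }
      assert (2 * PI * T * 1 <= 2 * PI * IZR n * T * Rabs (IZR (j1 * i2 - i1 * j2))).
      { apply Rmult_le_compat. assert (0 < 2 * PI * T) by (apply Rmult_lt_0_compat; lra). lra. lra.
        replace (2 * PI * IZR n * T) with ((2 * PI * T) * IZR n) by ring.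
        assert (0 < 2 * PI * T) by (apply Rmult_lt_0_compat; lra).
        replace (2 * PI * T) with (2 * PI * T * 1) at 1 by ring. apply Rmult_le_compat_l; lra. lra. }
      lra. }
    assert (Hm12 : (m1 <> 0 \/ m2 <> 0)%Z).
    { destruct (Z.eq_dec m1 0); [|left; auto]. right. intro E. apply Hdet.
      unfold det2. rewrite Hm1, Hm2, e, E. simpl. ring. }
    unfold torus_area. rewrite Hm1, Hm2.
    rewrite dbl_avg; auto.
    2: apply two_ev_cont; auto.
    2: apply (two_ev_per p Ha12' Ha2' Hc2').
    pose proof (I_lower p Ha12' Ha2' Hc2') as HI. fold T in HI.
    pose proof (sq_pos p Ha12' Ha2' Hc2') as Hsq.
    pose proof (k_range p Ha12' Ha2' Hc2') as Hk.
    set (I := RInt (two_ev p) 0 T) in *.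
    change (sqrt (a1 + par_a3 p)) with (sq p).
    assert (HIs : I * sq p > PI * (a1 + a2) / 2).
    { assert (0 < pa2 p * par_k p ^ 2 * PI / 4).
      { apply Rmult_lt_0_compat; [|lra]. apply Rmult_lt_0_compat; [|lra].
        apply Rmult_lt_0_compat. exact Ha2'. apply pow_lt. lra. }
      change (pa1 p) with a1 in *. change (pa2 p) with a2 in *. lra. }
    assert (HIp : I > 0).
    { assert (0 < PI * (a1 + a2) / 2) by (apply Rdiv_lt_0_compat; [apply Rmult_lt_0_compat|]; lra).
      destruct (Rle_dec I 0); auto. assert (I * sq p <= 0) by (apply Rmult_le_0_r; lra). lra. lra. }
    assert (Hgoal : Rabs (det2 w1 w2) * (I / T) >= 2 * PI * I).
    { replace (2 * PI * I) with ((2 * PI * T) * (I / T)) by (field; lra).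
      apply Rle_ge, Rmult_le_compat_r. left; apply Rdiv_lt_0_compat; lra. lra. }
    apply Rge_gt_trans with (2 * PI * I); auto.
    apply Rmult_lt_reg_r with (sq p). lra.
    replace (PI ^ 2 * (a1 + a2) / sq p * sq p) with (2 * PI * (PI * (a1 + a2) / 2)) by (field; lra).
    replace (2 * PI * I * sq p) with (2 * PI * (I * sq p)) by ring.
    apply Rmult_lt_compat_l; lra.
Qed.
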